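(* Let $\mathcal C$ be a class of Baire class 1 functions on compact Polish spaces which contains all functions that are differences of bounded semi-continuous functions. Let $T$ be a complete theory. Then $T$ is stable if and only if $T$ has NIP and $T$ is $\mathcal C$.
   Context: For a formula $\phi(x,y)$ and a countable sequence $(a_i:i<\omega)$, the functions $\phi(a_i,y)$ are regarded as continuous $\{0,1\}$-valued functions on the compact Polish space $S_{\tilde\phi}(\{a_i\})$ of complete $\tilde\phi$-types over $\{a_i:i<\omega\}$ ($\tilde\phi(y,x)=\phi(x,y)$), sending $q$ to $1$ iff $\phi(a_i,y)\in q$. $T$ is $\mathcal C$ means: for every formula $\phi(x,y)$ and every infinite sequence $(a_i:i<\omega)$ in the monster model, if $(\phi(a_i,y):i<\omega)$ converges pointwise to a function in $\mathcal C$, then there is no infinite sequence $(b_j:j<\omega)$ such that $\phi(a_i,b_j)$ holds iff $i<j$. A function is Baire class 1 if it is a pointwise limit of continuous functions; it is DBSC if it equals $F_1-F_2$ for bounded semi-continuous $F_1,F_2$. $T$ is stable if no formula has the order property (no $(a_i),(b_j)$ with $\phi(a_i,b_j)\iff i<j$); $T$ has NIP if no formula $\phi(x,y)$ admits $(a_i:i<\omega)$ such that for every $S\subseteq\omega$ some $b$ satisfies $\phi(a_i,b)\iff i\in S$. *)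

(* Defs.v *)
From HB Require Import structures.
From mathcomp Require Import all_boot all_order all_algebra.
From mathcomp Require Import all_classical all_reals all_analysis.
From Stdlib Require List.
Set Implicit Arguments. Unset Strict Implicit. Unset Printing Implicit Defensive.
Import Order.TTheory GRing.Theory Num.Theory.
Import numFieldNormedType.Exports.
Local Open Scope classical_set_scope.
Local Open Scope ring_scope.

Record language := Language {
  func : Type; farity : func -> nat;
  rel : Type;  rarity : rel -> nat }.

Inductive term (L : language) : Type :=
  | tvar : nat -> term L
  | tapp : forall f : func L, ('I_(farity f) -> term L) -> term L.

Inductive formula (L : language) : Type :=
  | fbot : formula L
  | feq : term L -> term L -> formula L
  | frel : forall r : rel L, ('I_(rarity r) -> term L) -> formula L
  | fimp : formula L -> formula L -> formula L
  | fall : nat -> formula L -> formula L.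

Record structure (L : language) := Structure {
  dom :> Type;
  funs : forall f : func L, ('I_(farity f) -> dom) -> dom;
  rels : forall r : rel L, ('I_(rarity r) -> dom) -> Prop }.

Section Semantics.
Variables (L : language) (M : structure L).

Fixpoint teval (e : nat -> M) (t : term L) : M :=
  match t with
  | tvar i => e i
  | tapp f ts => @funs L M f (fun j => teval e (ts j))
  end.

Definition upd (e : nat -> M) (v : nat) (m : M) : nat -> M :=
  fun i => if i == v then m else e i.

Fixpoint sat (e : nat -> M) (phi : formula L) : Prop :=
  match phi with
  | fbot => False
  | feq t u => teval e t = teval e u
  | frel r ts => @rels L M r (fun j => teval e (ts j))
  | fimp p q => sat e p -> sat e q
  | fall v p => forall m : M, sat (upd e v m) p
  end.

Fixpoint toccurs (i : nat) (t : term L) : Prop :=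
  match t with
  | tvar j => i = j
  | tapp f ts => exists j, toccurs i (ts j)
  end.

Fixpoint ffree (i : nat) (phi : formula L) : Prop :=
  match phi with
  | fbot => False
  | feq t u => toccurs i t \/ toccurs i u
  | frel r ts => exists j, toccurs i (ts j)
  | fimp p q => ffree i p \/ ffree i q
  | fall v p => i <> v /\ ffree i p
  end.

(* phi(x,y) with x = (v_0..v_{n-1}), y = (v_n..v_{n+k-1}) *)
Definition is_formula_xy (n k : nat) (phi : formula L) : Prop :=
  forall i, ffree i phi -> (i < n + k)%N.

Definition envxy (n k : nat) (a : 'I_n -> M) (b : 'I_k -> M) (d : M) : nat -> M :=
  fun i => match (insub i : option 'I_n) with
           | Some i' => a i'
           | None => match (insub (i - n)%N : option 'I_k) with
                     | Some j => b j
                     | None => d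
                     end
           end.

(* M |= phi(a, b) ; the default d is irrelevant for phi(x,y) *)
Definition holds (n k : nat) (phi : formula L) (a : 'I_n -> M) (b : 'I_k -> M) : Prop :=
  forall d : M, sat (envxy a b d) phi.

(* aleph_1-saturation: every finitely satisfiable set of formulas in the free
   variable v_0 with parameters from a countable set (range g) is realized.
   Each element of p is a formula together with an assignment of the other
   variables to parameters. *)
Definition aleph1_saturated : Prop :=
  forall (g : nat -> M) (p : formula L * (nat -> M) -> Prop),
    (forall x, p x -> forall i, i <> 0%N -> exists j, x.2 i = g j) ->
    (forall s : seq (formula L * (nat -> M)), (forall x, Stdlib.Lists.List.In x s -> p x) ->
        exists m : M, forall x, Stdlib.Lists.List.In x s -> sat (upd x.2 0 m) x.1) ->
    exists m : M, forall x, p x -> sat (upd x.2 0 m) x.1.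

Definition order_property (n k : nat) (phi : formula L) : Prop :=
  exists (a : nat -> 'I_n -> M) (b : nat -> 'I_k -> M),
    forall i j : nat, holds phi (a i) (b j) <-> (i < j)%N.

Definition stable : Prop :=
  forall n k (phi : formula L), is_formula_xy n k phi -> ~ order_property n k phi.

Definition NIP : Prop :=
  forall n k (phi : formula L), is_formula_xy n k phi ->
    ~ exists a : nat -> 'I_n -> M,
        forall S : set nat, exists b : 'I_k -> M,
          forall i : nat, holds phi (a i) b <-> S i.

(* ---------- the type space S_{phi~}({a_i}) ----------
   A complete phi~-type q over {a_i : i < omega} is identified with the
   sequence of truth values (q i = true iff phi(a_i,y) \in q), i.e. with a
   point of the Cantor space; these are exactly the finitely satisfiable
   patterns.  The function phi(a_i,y) is the i-th coordinate map. *)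
Definition phi_type_space (n k : nat) (phi : formula L) (a : nat -> 'I_n -> M)
  : set cantor_space :=
  [set q : cantor_space | forall N : nat, exists b : 'I_k -> M,
      forall i : nat, (i < N)%N -> (holds phi (a i) b <-> q i = true)].

(* T is C, for a class Cl of real functions on closed subsets of Cantor space
   (Cl K f means: the restriction of f to K belongs to the class) *)
Definition is_C (R : realType) (Cl : set cantor_space -> (cantor_space -> R) -> Prop)
  : Prop :=
  forall n k (phi : formula L) (a : nat -> 'I_n -> M), is_formula_xy n k phi ->
    (exists g : cantor_space -> R,
        Cl (phi_type_space k phi a) g /\
        forall q, phi_type_space k phi a q ->
          (fun i : nat => ((q i : bool)%:R : R)) @ \oo --> g q) ->
    ~ exists b : nat -> 'I_k -> M,
        forall i j : nat, holds phi (a i) (b j) <-> (i < j)%N.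

End Semantics.

Section Functions.
Variables (R : realType) (X : topologicalType).

Definition baire1_on (K : set X) (f : X -> R) : Prop :=
  exists fn : nat -> X -> R,
    (forall m, {within K, continuous (fn m)}) /\
    forall x, K x -> (fun m => fn m x) @ \oo --> f x.

Definition bounded_on (K : set X) (f : X -> R) : Prop :=
  exists B : R, forall x, K x -> `|f x| <= B.

Definition lsc_on (K : set X) (f : X -> R) : Prop :=
  forall x, K x -> forall e : R, 0 < e ->
    \forall y \near within K (nbhs x), f x - e < f y.

Definition usc_on (K : set X) (f : X -> R) : Prop :=
  forall x, K x -> forall e : R, 0 < e ->
    \forall y \near within K (nbhs x), f y < f x + e.

Definition semicontinuous_on (K : set X) (f : X -> R) : Prop :=
  lsc_on K f \/ usc_on K f.

Definition DBSC_on (K : set X) (f : X -> R) : Prop :=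
  exists F1 F2 : X -> R,
    bounded_on K F1 /\ semicontinuous_on K F1 /\
    bounded_on K F2 /\ semicontinuous_on K F2 /\
    forall x, K x -> f x = F1 x - F2 x.

End Functions.

(* Main.v *)
Require Import Defs.
From HB Require Import structures.
From mathcomp Require Import all_boot all_order all_algebra.
From mathcomp Require Import all_classical all_reals all_analysis.
Local Open Scope classical_set_scope.
From Stdlib Require List.
From mathcomp Require Import zify.
Import Order.TTheory GRing.Theory Num.Theory.
Import numFieldNormedType.Exports.
Set Implicit Arguments. Unset Strict Implicit.

Fixpoint teval_ext (L : language) (M : structure L) (e e' : nat -> M) (t : term L) {struct t} :
  (forall i, toccurs i t -> e i = e' i) -> teval e t = teval e' t.
Proof.
case: t => [i|f ts] /= H; first exact: H.
congr (@funs L M f); apply: boolp.funext => j; apply: teval_ext => i Hi.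
by apply: H; exists j.
Qed.

Lemma sat_ext (L : language) (M : structure L) (phi : formula L) :
  forall (e e' : nat -> M), (forall i, ffree i phi -> e i = e' i) ->
  (sat e phi <-> sat e' phi).
Proof.
elim: phi => [|t u|r ts|p IHp q IHq|v p IHp] e e' H /=.
- by [].
- rewrite (teval_ext (e' := e') (t := t)); last by move=> i Hi; apply: H; left.
  by rewrite (teval_ext (e' := e') (t := u)) //; move=> i Hi; apply: H; right.
- have -> : (fun j => teval e (ts j)) = (fun j => teval e' (ts j)) => //.
  apply: boolp.funext => j; apply: teval_ext => i Hi; apply: H; by exists j.
- have Hp := IHp e e' (fun i Hi => H i (or_introl Hi)).
  have Hq := IHq e e' (fun i Hi => H i (or_intror Hi)).
  by rewrite Hp Hq.
- split=> Hs m; [rewrite -(IHp (upd e v m))|rewrite (IHp (upd e v m) (upd e' v m))] => //;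
  move=> i Hi; rewrite /upd; case: eqP => // /eqP iv; apply: H; split=> //; exact/eqP.
Qed.

Definition fnot (L : language) (p : formula L) := fimp p (fbot L).
Definition fand (L : language) (p q : formula L) := fnot (fimp p (fnot q)).
Definition ftrue (L : language) := fnot (fbot L).
Definition fex (L : language) (v : nat) (p : formula L) := fnot (fall v (fnot p)).
Definition fld (L : language) (l s : nat) (p : formula L) :=
  fall l (fimp (feq (tvar L l) (tvar L s)) p).
Definition fsign (L : language) (b : bool) (p : formula L) := if b then p else fnot p.
Definition fconj (L : language) (s : seq (formula L)) := foldr (@fand L) (ftrue L) s.
Definition fexs (L : language) (vs : seq nat) (p : formula L) := foldr (@fex L) p vs.

Lemma sat_fand (L : language) (M : structure L) (e : nat -> M) p q :
  sat e (fand p q) <-> sat e p /\ sat e q.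
Proof.
rewrite /=; split; last by move=> [Hp Hq] H; exact: H Hp Hq.
move=> H; split; apply: boolp.contrapT => Hn; apply: H => Hp //; by move=> Hq; apply: Hn.
Qed.

Lemma sat_fsign (L : language) (M : structure L) (e : nat -> M) b p :
  sat e (fsign b p) <-> (sat e p <-> b).
Proof.
rewrite /fsign; case: b.
  by split; [move=> H; split|move=> [H1 H2]; apply: H2].
split; first by move=> H; split=> // Hp; case: (H Hp).
by move=> [H _] Hp; have := H Hp.
Qed.

Lemma sat_fconj (L : language) (M : structure L) (e : nat -> M) s :
  sat e (fconj s) <-> (forall p, List.In p s -> sat e p).
Proof.
elim: s => [|p s IH]; first by split=> [_ x []|_ []].
have -> : fconj (p :: s) = fand p (fconj s) by [].
rewrite (sat_fand e p (fconj s)) IH; split.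
  by move=> [Hp Hs] x [<-//|]; apply: Hs.
move=> H; split; first by apply: H; left.
by move=> x xs; apply: H; right.
Qed.

Fixpoint fconjn (L : language) (f : nat -> formula L) (r : nat) : formula L :=
  match r with 0 => ftrue L | r'.+1 => fand (fconjn f r') (f r') end.

Lemma sat_fconjn (L : language) (M : structure L) (e : nat -> M) (f : nat -> formula L) r :
  sat e (fconjn f r) <-> (forall p, (p < r)%N -> sat e (f p)).
Proof.
elim: r => [|r IH]; first by split=> [_ p //|_ []].
have -> : fconjn f r.+1 = fand (fconjn f r) (f r) by [].
rewrite sat_fand IH; split.
  by move=> [H1 H2] p; rewrite ltnS leq_eqVlt => /orP[/eqP->//|]; apply: H1.
by move=> H; split; [move=> p pr; apply: H; exact: ltnW|apply: H].
Qed.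

Lemma sat_fex (L : language) (M : structure L) (e : nat -> M) v p :
  sat e (fex v p) <-> exists m, sat (upd e v m) p.
Proof.
rewrite /=; split; last by move=> [m Hm] H; exact: H m Hm.
move=> H; apply: boolp.contrapT => Hn; apply: H => m Hm; apply: Hn; by exists m.
Qed.

Lemma sat_fld (L : language) (M : structure L) (e : nat -> M) l s p :
  l <> s -> (sat e (fld l s p) <-> sat (upd e l (e s)) p).
Proof.
move=> ls /=; rewrite /upd eqxx; have -> : (s == l) = false by apply/eqP => H; apply: ls.
by split; [move=> H; exact: H|move=> H m -> ].
Qed.

Lemma sat_fexs (L : language) (M : structure L) (e : nat -> M) vs p :
  sat e (fexs vs p) <-> exists f : nat -> M,
     sat (fun i => if i \in vs then f i else e i) p.
Proof.
elim: vs e => [|v vs IH] e.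
  split; first by move=> H; exists e.
  by move=> [f]; congr (sat _ p).
have -> : fexs (v :: vs) p = fex v (fexs vs p) by [].
rewrite (sat_fex e v (fexs vs p)); split.
  move=> [m /IH [f Hf]]; exists (fun i => if i \in vs then f i else m).
  congr (sat _ p): Hf; apply: boolp.funext => i; rewrite in_cons /upd.
  by case: (i \in vs); case: eqP => [->|]; rewrite ?orbT.
move=> [f Hf]; exists (f v); apply/IH; exists f.
congr (sat _ p): Hf; apply: boolp.funext => i; rewrite in_cons /upd.
by case: (i \in vs); case: eqP => [->|]; rewrite ?orbT.
Qed.

Fixpoint fldn (L : language) (src : nat -> nat) (N : nat) (p : formula L) : formula L :=
  match N with 0 => p | N'.+1 => fld N' (src N') (fldn src N' p) end.

Lemma sat_fldn (L : language) (M : structure L) (src : nat -> nat) N p :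
  (forall i, (N <= src i)%N) -> forall e : nat -> M,
  sat e (fldn src N p) <-> sat (fun i => if (i < N)%N then e (src i) else e i) p.
Proof.
elim: N => [|N IH] Hs e.
  by have -> : (fun i => if (i < 0)%N then e (src i) else e i) = e by apply: boolp.funext.
have -> : fldn src N.+1 p = fld N (src N) (fldn src N p) by [].
rewrite sat_fld; last by move=> E; have := Hs N; rewrite -E ltnn.
rewrite IH; last by move=> i; apply: leq_trans (Hs i).
suff -> : (fun i => if (i < N)%N then upd e N (e (src N)) (src i) else upd e N (e (src N)) i)
  = (fun i => if (i < N.+1)%N then e (src i) else e i) by [].
apply: boolp.funext => i; rewrite /upd.
have -> : (src i == N) = false by apply/negbTE; rewrite neq_ltn (Hs i) orbT.
case: ltnP => iN; first by rewrite ltnS ltnW.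
case: eqP => [->|iN']; first by rewrite ltnSn.
by rewrite ltnS leqNgt ltn_neqAle eq_sym (introF eqP iN') iN.
Qed.

Definition inst (L : language) (n k : nat) (xs ys : nat -> nat) (p : formula L) :=
  fldn (fun i => if (i < n)%N then xs i else ys (i - n)) (n + k) p.

Lemma sat_inst (L : language) (M : structure L) (n k : nat) (phi : formula L)
  (xs ys : nat -> nat) (e : nat -> M) :
  is_formula_xy n k phi -> (forall i, (n + k <= xs i)%N) -> (forall i, (n + k <= ys i)%N) ->
  (sat e (inst n k xs ys phi) <->
   holds phi (fun l : 'I_n => e (xs l)) (fun j : 'I_k => e (ys j))).
Proof.
move=> Hphi Hx Hy; rewrite /inst sat_fldn; last by move=> i; case: ifP.
have key : forall d, sat (fun i => if (i < n + k)%N then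
     e (if (i < n)%N then xs i else ys (i - n)) else e i) phi <->
   sat (envxy (fun l : 'I_n => e (xs l)) (fun j : 'I_k => e (ys j)) d) phi.
  move=> d; apply: sat_ext => i /Hphi ink; rewrite ink /envxy.
  case: insubP => [i' iltn vi|]; first by rewrite iltn vi.
  rewrite -leqNgt => nlei; rewrite ltnNge nlei /=.
  case: insubP => [j' _ vj|]; first by rewrite vj.
  by rewrite ltn_subLR // ink.
split; first by move=> H d; apply/key.
by move=> H; apply/(key (e 0)); apply: H.
Qed.

Definition dep (L : language) (M : structure L) (th : formula L) (D : nat -> Prop) :=
  forall e1 e2 : nat -> M, (forall i, D i -> e1 i = e2 i) -> (sat e1 th <-> sat e2 th).

Definition Inv (L : language) (M : structure L) (U : nat -> nat) (G : set (formula L))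
   (T : nat) (E : nat -> M) :=
  forall s : seq (formula L), (forall th, List.In th s -> G th) ->
  exists w : nat -> M, (forall i, (forall t, (T <= t)%N -> i <> U t) -> w i = E i) /\
     forall th, List.In th s -> sat w th.

Lemma union_lists (A B : Type) (P : A -> Prop) (F : seq A -> B) (l : seq B) :
  (forall x, List.In x l -> exists s, (forall a, List.In a s -> P a) /\ x = F s) ->
  exists s0, (forall a, List.In a s0 -> P a) /\
    forall x, List.In x l -> exists s, x = F s /\ (forall a, List.In a s -> List.In a s0).
Proof.
elim: l => [|x l IH] H; first by exists [::]; split=> // x [].
have [s0 [H1 H2]] := IH (fun y yl => H y (or_intror yl)).
have [s [Hs ->]] := H x (or_introl erefl).
exists (s ++ s0); split.
  by move=> a Ha; case: (List.in_app_or _ _ _ Ha) => [/Hs|/H1].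
move=> y [<-|/H2 [s' [-> Hs']]].
  by exists s; split=> // a Ha; apply: List.in_or_app; left.
by exists s'; split=> // a Ha; apply: List.in_or_app; right; apply: Hs'.
Qed.

Definition bigB (L : language) (bnd : formula L -> nat) (s : seq (formula L)) :=
  foldr (fun th acc => maxn (bnd th) acc) 0 s.

Lemma bigB_ge (L : language) (bnd : formula L -> nat) s th :
  List.In th s -> (bnd th <= bigB bnd s)%N.
Proof.
elim: s => [//|x s IH] /= [->|/IH H]; first by rewrite leq_maxl.
by apply: leq_trans H _; rewrite leq_maxr.
Qed.

Lemma inv_step (L : language) (M : structure L) (Hsat : aleph1_saturated M)
  (U : nat -> nat) (HUinj : injective U) (HU0 : forall t, U t <> 0)
  (G : set (formula L)) (bnd : formula L -> nat)
  (Hdep : forall th, G th -> dep M th (fun i => i <> 0 /\ forall t, (bnd th <= t)%N -> i <> U t))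
  (T : nat) (E : nat -> M) :
  Inv U G T E -> exists m, Inv U G T.+1 (upd E (U T) m).
Proof.
move=> HI.
pose vs (s : seq (formula L)) := map U (iota T.+1 (bigB bnd s)).
pose chi (s : seq (formula L)) := fld (U T) 0 (fexs (vs s) (fconj s)).
pose p := fun x : formula L * (nat -> M) =>
  exists s, (forall th, List.In th s -> G th) /\ x = (chi s, E).
have Hvs : forall s i, i \in vs s -> exists t, (T < t)%N /\ i = U t.
  move=> s i /mapP [t]; rewrite mem_iota => /andP[Tt _] ->; by exists t.
have [m Hm] : exists m : M, forall x, p x -> sat (upd x.2 0 m) x.1.
  apply: (Hsat E).
    by move=> x [s [_ ->]] i _; exists i.
  move=> l Hl.
  have [s0 [Hs0 Hl0]] := @union_lists _ _ _ (fun s => (chi s, E)) l Hl.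
  have [w [Hw1 Hw2]] := HI s0 Hs0.
  exists (w (U T)) => x /Hl0 [s [-> Hss0]]; rewrite /fst /snd /chi.
  rewrite sat_fld; last exact: HU0.
  apply/sat_fexs; exists w; apply/sat_fconj => th Hth.
  have Gth : G th by apply: Hs0; apply: Hss0.
  apply: (proj1 (Hdep th Gth w _ _)); last by apply: Hw2; apply: Hss0.
  move=> i [i0 Hi].
  case: ifP => // ivs; rewrite /upd.
  case: eqP => [->//|iUT]; rewrite (introF eqP i0).
  apply: Hw1 => t Tt iUt; move: Tt; rewrite leq_eqVlt => /orP[/eqP Tt|Tt].
    by apply: iUT; rewrite iUt Tt.
  case: (ltnP t (bnd th)) => tb; last by apply: (Hi t tb).
  move/negP: ivs; apply; rewrite iUt; apply: map_f; rewrite mem_iota Tt /=.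
  have := bigB_ge bnd Hth; lia.
exists m => s Hs.
have := Hm (chi s, E) (ex_intro _ s (conj Hs erefl)).
rewrite /fst /snd /chi sat_fld; last exact: HU0.
move=> /sat_fexs [f Hf].
exists (fun i => if i \in vs s then f i else upd E (U T) m i); split.
  move=> i Hi; case: ifP => // /Hvs [t [Tt iUt]]; by case: (Hi t Tt).
move=> th Hth; have H1 := proj1 (sat_fconj _ _) Hf th Hth.
apply: (proj1 (Hdep th (Hs th Hth) _ _ _) H1) => i [i0 _] /=; case: ifP => // _.
by rewrite /upd (introF eqP i0); case: eqP.
Qed.

Lemma realize (L : language) (M : structure L) (m0 : M) (Hsat : aleph1_saturated M)
  (U : nat -> nat) (HUinj : injective U) (HU0 : forall t, U t <> 0)
  (HUge : forall t, (t <= U t)%N)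
  (G : set (formula L))
  (Hdep : forall th, G th -> exists B,
      dep M th (fun i => i <> 0 /\ forall t, (B <= t)%N -> i <> U t))
  (e : nat -> M) :
  Inv U G 0 e ->
  exists w : nat -> M, (forall i, (forall t, i <> U t) -> w i = e i) /\
     forall th, G th -> sat w th.
Proof.
move=> HI0.
have Hex1 : forall th, exists B, G th -> dep M th
             (fun i => i <> 0 /\ forall t, (B <= t)%N -> i <> U t).
  move=> th; have [Gth|nG] := boolp.pselect (G th); last by exists 0.
  by have [B HB] := Hdep th Gth; exists B.
have [bnd Hbnd] := boolp.choice Hex1.
have Hex2 : forall ET : (nat -> M) * nat, exists m,
    Inv U G ET.2 ET.1 -> Inv U G ET.2.+1 (upd ET.1 (U ET.2) m).
  move=> [E T] /=; have [HI|nHI] := boolp.pselect (Inv U G T E); last by exists m0.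
  by have [m Hm] := inv_step Hsat HUinj HU0 Hbnd HI; exists m.
have [f Hf] := boolp.choice Hex2.
pose envs := fix envs (T : nat) : nat -> M :=
  match T with 0 => e | T'.+1 => upd (envs T') (U T') (f (envs T', T')) end.
have HI : forall T, Inv U G T (envs T).
  by elim=> [//|T IH]; apply: (Hf (envs T, T)).
have Hstab : forall T T' i, (T <= T')%N -> (forall t, (T <= t)%N -> i <> U t) ->
    envs T' i = envs T i.
  move=> T T' i; elim: T' => [|T' IH]; first by rewrite leqn0 => /eqP ->.
  rewrite leq_eqVlt => /orP[/eqP->//|]; rewrite ltnS => TT' Hi.
  rewrite /= /upd; case: eqP => [iU|_]; last exact: IH.
  by case: (Hi T' TT').
exists (fun i => envs i.+1 i); split.
  by move=> i Hi; rewrite (Hstab 0) // => t _; apply: Hi.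
move=> th Gth.
have [w [Hw1 Hw2]] : exists w : nat -> M, (forall i, (forall t, (bnd th <= t)%N -> i <> U t) -> w i = envs (bnd th) i) /\
     forall th', List.In th' [:: th] -> sat w th'.
  by apply: HI => x [<-|[]].
apply: (proj1 (Hbnd th Gth w _ _)); last by apply: Hw2; left.
move=> i [i0 Hi]; rewrite Hw1 //.
rewrite -(Hstab (bnd th) (maxn (bnd th) i.+1) i) ?leq_maxl //.
rewrite (Hstab i.+1 (maxn (bnd th) i.+1) i) ?leq_maxr // => t it iUt.
by move: (HUge t); rewrite -iUt leqNgt it.
Qed.

Definition dec2 (M : Type) (m0 : M) (n : nat) (A : nat -> 'I_n -> M) (t : nat) : M :=
  match insub (t %% n) with Some l => A (t %/ n) l | None => m0 end.

Lemma dec2_eq (M : Type) (m0 : M) (n : nat) (A : nat -> 'I_n -> M) p (l : 'I_n) :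
  dec2 m0 A (p * n + l) = A p l.
Proof.
have n0 : (0 < n)%N by apply: leq_ltn_trans (ltn_ord l).
rewrite /dec2 modnMDl modn_small // divnMDl // divn_small // addn0.
case: insubP => [l' _ vl|]; last by rewrite ltn_ord.
by congr (A p _); apply: val_inj.
Qed.

Definition decy (M : Type) (m0 : M) (k : nat) (yv : 'I_k -> M) (t : nat) : M :=
  match insub t with Some j => yv j | None => m0 end.

Lemma decy_eq (M : Type) (m0 : M) (k : nat) (yv : 'I_k -> M) (j : 'I_k) :
  decy m0 yv j = yv j.
Proof.
rewrite /decy; case: insubP => [j' _ vj|]; last by rewrite ltn_ord.
by congr yv; apply: val_inj.
Qed.

Lemma sat_theta (L : language) (M : structure L) (m0 : M) (n k : nat) (phi : formula L)
  (Hphi : is_formula_xy n k phi) (xs : nat -> nat -> nat) (ys : nat -> nat)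
  (Hx : forall p l, (n + k <= xs p l)%N) (Hy : forall j, (n + k <= ys j)%N)
  (Hdisj : forall p l j, xs p l <> ys j)
  (dec : nat -> nat) (Hdec : forall j, dec (ys j) = j)
  (r : nat) (S : nat -> bool) (e : nat -> M) :
  sat e (fexs (map ys (iota 0 k)) (fconjn (fun p => fsign (S p) (inst n k (xs p) ys phi)) r))
  <-> exists yv : 'I_k -> M, forall p, (p < r)%N ->
        (holds phi (fun l : 'I_n => e (xs p l)) yv <-> S p).
Proof.
rewrite sat_fexs; split.
  move=> [f /sat_fconjn Hf]; exists (fun j : 'I_k => f (ys j)) => p pr.
  move: (Hf p pr); rewrite sat_fsign sat_inst //.
  have -> : (fun l : 'I_n => if xs p l \in [seq ys i | i <- iota 0 k] then f (xs p l) else e (xs p l))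
     = (fun l : 'I_n => e (xs p l)).
    apply: boolp.funext => l; case: ifP => // /mapP [j _ E]; by case: (Hdisj _ _ _ E).
  have -> // : (fun j : 'I_k => if ys j \in [seq ys i | i <- iota 0 k] then f (ys j) else e (ys j))
     = (fun j : 'I_k => f (ys j)).
  apply: boolp.funext => j; rewrite map_f // mem_iota /=; exact: ltn_ord.
move=> [yv Hyv]; exists (fun i => decy m0 yv (dec i)).
apply/sat_fconjn => p pr; rewrite sat_fsign sat_inst //.
have -> : (fun l : 'I_n => if xs p l \in [seq ys i | i <- iota 0 k] then decy m0 yv (dec (xs p l)) else e (xs p l))
     = (fun l : 'I_n => e (xs p l)).
  apply: boolp.funext => l; case: ifP => // /mapP [j _ E]; by case: (Hdisj _ _ _ E).
have -> : (fun j : 'I_k => if ys j \in [seq ys i | i <- iota 0 k] then decy m0 yv (dec (ys j)) else e (ys j))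
     = yv.
  apply: boolp.funext => j; rewrite map_f ?mem_iota /= ?ltn_ord // Hdec; exact: decy_eq.
exact: Hyv.
Qed.

Lemma bound_list (A : Type) (P : nat -> A -> Prop) (s : seq A) :
  (forall x, List.In x s -> exists r, P r x) ->
  (forall r r' x, (r <= r')%N -> P r x -> P r' x) ->
  exists R, forall x, List.In x s -> P R x.
Proof.
move=> H Hmon; elim: s H => [|x s IH] H; first by exists 0.
have [R HR] := IH (fun y ys => H y (or_intror ys)).
have [r Hr] := H x (or_introl erefl).
exists (maxn r R) => y [<-|ys]; first by apply: Hmon Hr; rewrite leq_maxl.
by apply: Hmon (HR y ys); rewrite leq_maxr.
Qed.

Lemma phase1 (L : language) (M : structure L) (m0 : M) (Hsat : aleph1_saturated M)
  (n k : nat) (phi : formula L) (Hphi : is_formula_xy n k phi)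
  (Hfin : forall r, exists A : nat -> 'I_n -> M, forall S : nat -> bool,
     exists y : 'I_k -> M, forall p, (p < r)%N -> (holds phi (A p) y <-> S p)) :
  exists A : nat -> 'I_n -> M, forall r (S : nat -> bool),
     exists y : 'I_k -> M, forall p, (p < r)%N -> (holds phi (A p) y <-> S p).
Proof.
pose V0 := (n + k).+1.
pose U := fun t => V0 + 2 * t.
pose xs := fun p l => U (p * n + l).
pose ys := fun j => V0 + 2 * j + 1.
pose th := fun r S => fexs (map ys (iota 0 k))
   (fconjn (fun p => fsign (S p) (inst n k (xs p) ys phi)) r).
have Hx : forall p l, (n + k <= xs p l)%N by move=> p l; rewrite /xs /U /V0; lia.
have Hy : forall j, (n + k <= ys j)%N by move=> j; rewrite /ys /V0; lia.
have Hdisj : forall p l j, xs p l <> ys j by move=> p l j; rewrite /xs /ys /U; lia.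
have Hdec : forall j, (fun i => (i - V0) %/ 2) (ys j) = j by move=> j; rewrite /ys; lia.
have Hchar := @sat_theta L M m0 n k phi Hphi xs ys Hx Hy Hdisj (fun i => (i - V0) %/ 2) Hdec.
pose G := fun f => exists r S, f = th r S.
have HUinj : injective U by move=> a b; rewrite /U; lia.
have HU0 : forall t, U t <> 0 by move=> t; rewrite /U /V0; lia.
have HUge : forall t, (t <= U t)%N by move=> t; rewrite /U; lia.
have Hdep : forall f, G f -> exists B,
      dep M f (fun i => i <> 0 /\ forall t, (B <= t)%N -> i <> U t).
  move=> f [r [S ->]]; exists (r * n) => e1 e2 He.
  rewrite !Hchar.
  suff E : forall p, (p < r)%N -> (fun l : 'I_n => e1 (xs p l)) = (fun l : 'I_n => e2 (xs p l)).
    by split=> [[yv H]|[yv H]]; exists yv => p pr; [rewrite -(E p pr)|rewrite (E p pr)]; apply: H.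
  move=> p pr; apply: boolp.funext => l; apply: He; split.
    by rewrite /xs /U /V0; lia.
  move=> t rt; rewrite /xs => /HUinj; have := ltn_ord l.
  have : (p.+1 * n <= r * n)%N by rewrite leq_mul2r pr orbT.
  lia.
have HInv : Inv U G 0 (fun _ => m0).
  move=> s Hs.
  have [R HR] := @bound_list _ (fun R f => exists r S, (r <= R)%N /\ f = th r S) s
     (fun x Hx => let: ex_intro r (ex_intro Sx E) := Hs x Hx in
        ex_intro _ r (ex_intro _ r (ex_intro _ Sx (conj (leqnn r) E))))
     (fun r r' x rr' '(ex_intro r0 (ex_intro Sx (conj H E))) =>
        ex_intro _ r0 (ex_intro _ Sx (conj (leq_trans H rr') E))).
  have [A HA] := Hfin R.
  pose w := fun i => if (V0 <= i)%N && ((i - V0) %% 2 == 0)%N then dec2 m0 A ((i - V0) %/ 2) else m0.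
  exists w; split.
    move=> i Hi; rewrite /w; case: ifP => // /andP[H1 /eqP H2].
    by case: (Hi ((i - V0) %/ 2) isT); rewrite /U; lia.
  move=> f /HR [r [S [rR ->]]]; apply/Hchar.
  have [y Hy'] := HA S; exists y => p pr.
  have -> : (fun l : 'I_n => w (xs p l)) = A p.
    apply: boolp.funext => l; rewrite /w /xs /U.
    have -> : (V0 <= V0 + 2 * (p * n + l))%N && ((V0 + 2 * (p * n + l) - V0) %% 2 == 0)%N by apply/andP; split; [lia|apply/eqP; lia].
    have -> : (V0 + 2 * (p * n + l) - V0) %/ 2 = p * n + l by lia.
    exact: dec2_eq.
  by apply: Hy'; apply: leq_trans rR.
have [w [_ Hw]] := @realize L M m0 Hsat U HUinj HU0 HUge G Hdep (fun _ => m0) HInv.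
exists (fun p (l : 'I_n) => w (xs p l)) => r S.
by apply/Hchar; apply: Hw; exists r, S.
Qed.

Lemma phase2 (L : language) (M : structure L) (m0 : M) (Hsat : aleph1_saturated M)
  (n k : nat) (phi : formula L) (Hphi : is_formula_xy n k phi)
  (A : nat -> 'I_n -> M)
  (HA : forall r (S : nat -> bool),
     exists y : 'I_k -> M, forall p, (p < r)%N -> (holds phi (A p) y <-> S p)) :
  forall S : set nat, exists b : 'I_k -> M, forall i, holds phi (A i) b <-> S i.
Proof.
move=> S.
pose Sb := fun p => `[< S p >].
pose V0 := (n + k).+1.
pose U := fun t => V0 + 2 * t.
pose xs := fun p l => V0 + 2 * (p * n + l) + 1.
pose th := fun p => fsign (Sb p) (inst n k (xs p) U phi).
have Hx : forall p l, (n + k <= xs p l)%N by move=> p l; rewrite /xs /V0; lia.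
have Hy : forall j, (n + k <= U j)%N by move=> j; rewrite /U /V0; lia.
have Hchar : forall (p : nat) (e : nat -> M), sat e (th p) <->
   (holds phi (fun l : 'I_n => e (xs p l)) (fun j : 'I_k => e (U j)) <-> Sb p).
  by move=> p e; rewrite (sat_fsign e (Sb p)) sat_inst.
pose G := fun f => exists p, f = th p.
have HUinj : injective U by move=> a b; rewrite /U; lia.
have HU0 : forall t, U t <> 0 by move=> t; rewrite /U /V0; lia.
have HUge : forall t, (t <= U t)%N by move=> t; rewrite /U; lia.
have Hdep : forall f, G f -> exists B,
      dep M f (fun i => i <> 0 /\ forall t, (B <= t)%N -> i <> U t).
  move=> f [p ->]; exists k => e1 e2 He.
  rewrite !Hchar.
  have -> : (fun l : 'I_n => e1 (xs p l)) = (fun l : 'I_n => e2 (xs p l)).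
    apply: boolp.funext => l; apply: He; split; first by rewrite /xs; lia.
    by move=> t _; rewrite /xs /U; lia.
  have -> // : (fun j : 'I_k => e1 (U j)) = (fun j : 'I_k => e2 (U j)).
  apply: boolp.funext => j; apply: He; split; first by rewrite /U /V0; lia.
  by move=> t kt /HUinj; have := ltn_ord j; lia.
pose e2 := fun i => if (V0 <= i)%N && ((i - V0) %% 2 == 1)%N then dec2 m0 A ((i - V0) %/ 2) else m0.
have He2 : forall p (l : 'I_n), e2 (xs p l) = A p l.
  move=> p l; rewrite /e2 /xs.
  have -> : (V0 <= V0 + 2 * (p * n + l) + 1)%N && ((V0 + 2 * (p * n + l) + 1 - V0) %% 2 == 1)%N by apply/andP; split; [lia|apply/eqP; lia].
  have -> : (V0 + 2 * (p * n + l) + 1 - V0) %/ 2 = p * n + l by lia.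
  exact: dec2_eq.
have HInv : Inv U G 0 e2.
  move=> s Hs.
  have [R HR] := @bound_list _ (fun R f => exists p, (p < R)%N /\ f = th p) s
     (fun x Hx => let: ex_intro p E := Hs x Hx in
        ex_intro _ p.+1 (ex_intro _ p (conj (ltnSn p) E)))
     (fun r r' x rr' '(ex_intro p (conj H E)) =>
        ex_intro _ p (conj (leq_trans H rr') E)).
  have [y Hy'] := HA R Sb.
  pose w := fun i => if (V0 <= i)%N && ((i - V0) %% 2 == 0)%N then decy m0 y ((i - V0) %/ 2) else e2 i.
  exists w; split.
    move=> i Hi; rewrite /w; case: ifP => // /andP[H1 /eqP H2].
    by case: (Hi ((i - V0) %/ 2) isT); rewrite /U; lia.
  move=> f /HR [p [pR ->]]; apply/Hchar.
  have -> : (fun l : 'I_n => w (xs p l)) = A p.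
    apply: boolp.funext => l; rewrite /w.
    have -> : (V0 <= xs p l)%N && ((xs p l - V0) %% 2 == 0)%N = false.
      by apply/negbTE; apply/nandP; right; apply/eqP; rewrite /xs; lia.
    exact: He2.
  have -> : (fun j : 'I_k => w (U j)) = y.
    apply: boolp.funext => j; rewrite /w /U.
    have -> : (V0 <= V0 + 2 * j)%N && ((V0 + 2 * j - V0) %% 2 == 0)%N by apply/andP; split; [lia|apply/eqP; lia].
    have -> : (V0 + 2 * j - V0) %/ 2 = j by lia.
    exact: decy_eq.
  exact: Hy'.
have [w [Hw1 Hw]] := @realize L M m0 Hsat U HUinj HU0 HUge G Hdep e2 HInv.
exists (fun j : 'I_k => w (U j)) => i.
have := proj1 (Hchar i w) (Hw _ (ex_intro _ i erefl)).
have -> : (fun l : 'I_n => w (xs i l)) = A i.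
  apply: boolp.funext => l; rewrite Hw1 ?He2 //.
  by move=> t; rewrite /xs /U; lia.
by rewrite /Sb asboolE.
Qed.

Definition sinc (h : nat -> nat) := forall i, (h i < h i.+1)%N.

Lemma sinc_lt h : sinc h -> forall i j, (i < j)%N -> (h i < h j)%N.
Proof.
move=> Hh i; elim=> [//|j IH]; rewrite ltnS leq_eqVlt => /orP[/eqP->//|/IH H].
exact: ltn_trans H (Hh j).
Qed.

Lemma sinc_inv h : sinc h -> forall i j, (h i < h j)%N -> (i < j)%N.
Proof.
move=> Hh i j H; rewrite ltnNge; apply/negP; rewrite leq_eqVlt => /orP[/eqP E|/(sinc_lt Hh) H'].
  by move: H; rewrite E ltnn.
by move: (ltn_trans H H'); rewrite ltnn.
Qed.

Lemma sorted_map_sinc f s : sinc f -> sorted ltn s -> sorted ltn (map f s).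
Proof.
move=> Hf; case: s => [//|x s] /=; elim: s x => [//|y s IH] x /= /andP[xy Hp].
by rewrite (sinc_lt Hf xy) IH.
Qed.

Lemma in_range_sorted u : sinc u -> forall L, sorted ltn L -> (forall x, x \in L -> exists p, x = u p) ->
  exists pi, [/\ sorted ltn pi, size pi = size L & L = map u pi].
Proof.
move=> Hu; elim=> [|x L IH] HL HR; first by exists [::].
have [pi [Hpi1 Hpi2 Hpi3]] := IH (path_sorted HL) (fun y yL => HR y (@mem_behead _ (x :: L) y yL)).
have [p Hp] := HR x (mem_head x L).
exists (p :: pi); split; [|by rewrite /= Hpi2|by rewrite /= Hp Hpi3].
move: HL; rewrite Hpi3 Hp; case: pi Hpi1 {Hpi2 Hpi3} => [//|q pi] /= -> /andP[H _]; rewrite andbT.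
exact: (sinc_inv Hu H).
Qed.

Lemma ramsey (m : nat) : forall c : seq nat -> bool, exists h : nat -> nat, sinc h /\
  exists col : bool, forall s, size s = m -> sorted ltn s -> c (map h s) = col.
Proof.
elim: m => [|m IH] c.
  exists id; split=> //; exists (c [::]) => s; by case: s.
have [F HF] := boolp.choice IH.
pose cT (u : nat -> nat) : seq nat -> bool := fun s => c (u 0 :: map (u \o succn) s).
pose nxt (u : nat -> nat) := fun i => u (F (cT u) i).+1.
pose us := fix us T := match T with 0 => id | T'.+1 => nxt (us T') end.
pose col := fun t => projT1 (boolp.cid (proj2 (HF (cT (us t))))).
have Hcol : forall t s, size s = m -> sorted ltn s -> cT (us t) (map (F (cT (us t))) s) = col t.
  move=> t s Hs1 Hs2; rewrite /col; case: boolp.cid => /= b Hb; exact: Hb.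
have Hsinc : forall T, sinc (us T).
  elim=> [//|T IHT] i /=; rewrite /nxt; apply: sinc_lt => //.
  by rewrite ltnS; exact: (proj1 (HF (cT (us T)))).
have Hrange : forall T d, exists rho : nat -> nat, forall i, us (T + d) i = us T (rho i).
  move=> T; elim=> [|d [rho Hrho]]; first by exists id => i; rewrite addn0.
  exists (fun i => rho (F (cT (us (T + d))) i).+1) => i.
  by rewrite addnS /= /nxt Hrho.
pose x := fun t => us t 0.
have Hx : forall t t', (t < t')%N -> exists p, x t' = us t.+1 p.
  move=> t t' tt'; have [rho Hrho] := Hrange t.+1 (t' - t.+1).
  by exists (rho 0); rewrite /x -Hrho subnKC.
have Hxinc : forall t t', (t < t')%N -> (x t < x t')%N.
  move=> t t' /Hx [p ->] /=; rewrite /nxt /x; apply: sinc_lt => //.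
have [cl Hcl] : exists cl, forall N, exists t, (N <= t)%N /\ col t = cl.
  have [H|H] := boolp.pselect (forall N, exists t, (N <= t)%N /\ col t = true).
    by exists true.
  exists false => N; move/boolp.existsNP: H => [N0 /boolp.forallNP H0].
  exists (maxn N N0); split; first by rewrite leq_maxl.
  apply/negbTE/negP => Hc; apply: (H0 (maxn N N0)); split=> //; by rewrite leq_maxr.
have [Gf HG] := boolp.choice Hcl.
pose e := fix e i := match i with 0 => Gf 0 | i'.+1 => Gf (e i').+1 end.
have He : sinc e by move=> i /=; exact: (proj1 (HG _)).
have Hecol : forall i, col (e i) = cl by case=> [|i] /=; exact: (proj2 (HG _)).
exists (fun i => x (e i)); split.
  by move=> i; apply: Hxinc; apply: He.
exists cl => -[//|t0 s] /= [Hsz] Hsort.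
set T := e t0.
have Hs' : sorted ltn (map (fun i => x (e i)) s).
  apply: sorted_map_sinc; first by move=> i; apply: Hxinc; apply: He.
  exact: path_sorted Hsort.
have Hr : forall y, y \in map (fun i => x (e i)) s -> exists p, y = us T.+1 p.
  move=> y /mapP [t ts ->]; apply: Hx; apply: sinc_lt => //.
  by move: Hsort; rewrite (path_sortedE ltn_trans) => /andP[/allP /(_ t ts)].
have [pi [Hpi1 Hpi2 Hpi3]] := in_range_sorted (Hsinc T.+1) Hs' Hr.
rewrite Hpi3 -(Hecol t0) -/T -(Hcol T pi) //; last by rewrite Hpi2 size_map.
by rewrite /cT -map_comp.
Qed.

Fixpoint lamf (P : nat -> Prop) (j : nat) : nat :=
  match j with 0 => 0 | j'.+1 => if `[< P j'.+1 >] then j'.+1 else lamf P j' end.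

Lemma lamf_le P j : (lamf P j <= j)%N.
Proof. elim: j => [//|j IH] /=; case: ifP => // _; exact: leq_trans IH _. Qed.

Lemma lamf_ge P j l : (0 < l)%N -> (l <= j)%N -> P l -> (l <= lamf P j)%N.
Proof.
move=> l0; elim: j => [|j IH]; first by rewrite leqn0 => /eqP l0'; move: l0; rewrite l0'.
rewrite leq_eqVlt => /orP[/eqP lj|lj] Pl /=.
  have H : `[< P j.+1 >] = true by apply/asboolP; rewrite -lj.
  by rewrite H -lj.
case: ifP => _; first exact: ltnW.
exact: IH.
Qed.

Lemma lamf_P P j : lamf P j = 0 \/ P (lamf P j).
Proof.
elim: j => [|j IH] /=; first by left.
by case: ifP => // /asboolP H; right.
Qed.

Lemma proj_near (x : cantor_space) (N : nat) : \forall y \near x, y N = x N.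
Proof.
have h := @proj_continuous nat (fun _ => bool) N x.
exact: (h _ (discrete_set1 (x N))).
Qed.

Lemma cyl_near (x : cantor_space) (N : nat) :
  \forall y \near x, forall i, (i < N)%N -> y i = x i.
Proof.
elim: N => [|N IH]; first by apply: filterE => y i.
apply: filterS (filterI IH (proj_near x N)) => y [H1 H2] i.
rewrite ltnS leq_eqVlt => /orP[/eqP->//|iN]; exact: H1.
Qed.

Definition smax (s : seq nat) := foldr maxn 0 s.

Lemma smax_ge s x : x \in s -> (x <= smax s)%N.
Proof.
elim: s => [//|y s IH]; rewrite in_cons => /orP[/eqP->|/IH H] /=; first by rewrite leq_maxl.
by apply: leq_trans H _; rewrite leq_maxr.
Qed.

Definition Palt (l : nat) (q : cantor_space) : Prop :=
  exists s : seq nat, [/\ sorted ltn s, size s = l &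
     forall p, (p < l)%N -> q (nth 0 s p) = ~~ odd p].

Lemma Palt0 q : Palt 0 q.
Proof. by exists [::]. Qed.

Lemma Palt_near l q : Palt l q -> \forall y \near q, Palt l y.
Proof.
move=> [s [Hs1 Hs2 Hs3]].
apply: filterS (cyl_near q (smax s).+1) => y Hy; exists s; split=> // p pl.
rewrite Hy ?Hs3 // ltnS; apply: smax_ge; apply: mem_nth; by rewrite Hs2.
Qed.


Lemma Palt_last l q s : [/\ sorted ltn s, size s = l &
     forall p, (p < l)%N -> q (nth 0 s p) = ~~ odd p] ->
  ~ Palt l.+1 q -> forall i, (smax s < i)%N -> q i = odd l.
Proof.
move=> [Hs1 Hs2 Hs3] nP i si; have [//|Hq] := eqVneq (q i) (odd l); exfalso; apply: nP.
exists (rcons s i); split.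
- case: s Hs1 {Hs2 Hs3} si => [//|x s] /= Hp si; rewrite rcons_path Hp /=.
  by move: si; apply: leq_ltn_trans; apply: (smax_ge (s := x :: s)); exact: mem_last.
- by rewrite size_rcons Hs2.
- move=> p; rewrite ltnS leq_eqVlt => /orP[/eqP->|pl].
    by rewrite nth_rcons Hs2 ltnn eqxx; move: Hq; case: (q i); case: (odd l).
  by rewrite nth_rcons Hs2 pl Hs3.
Qed.

Local Open Scope ring_scope.

Lemma stepA (R : realType) (Cl : set cantor_space -> (cantor_space -> R) -> Prop)
  (HClDBSC : forall K f, closed K -> DBSC_on K f -> Cl K f)
  (L : language) (M : structure L) (n k : nat) (phi : formula L)
  (Hphi : is_formula_xy n k phi) (a : nat -> 'I_n -> M) (b : nat -> 'I_k -> M)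
  (Hab : forall i j, holds phi (a i) (b j) <-> (i < j)%N)
  (HC : is_C M Cl) (m : nat)
  (Hno : forall s, size s = m -> sorted ltn s ->
     ~ exists y : 'I_k -> M, forall p, (p < m)%N ->
         (holds phi (a (nth 0 s p)) y <-> ~~ odd p)) : False.
Proof.
pose K := phi_type_space k phi a.
have HKm : forall q, K q -> ~ Palt m q.
  move=> q Kq [s [Hs1 Hs2 Hs3]]; apply: (Hno s Hs2 Hs1).
  have [y Hy] := Kq (smax s).+1; exists y; move=> p pm.
  apply: iff_trans (Hy _ _) _; first by rewrite ltnS; apply: smax_ge; apply: mem_nth; rewrite Hs2.
  by rewrite Hs3 //; case: (odd p).
pose lam := fun q => lamf (fun l => Palt l q) m.
have Hlam_le : forall q, (lam q <= m)%N by move=> q; apply: lamf_le.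
have HlamP : forall q, Palt (lam q) q.
  by move=> q; rewrite /lam; case: (lamf_P (fun l => Palt l q) m) => [->|//]; apply: Palt0.
have Hmono : forall q, nbhs q (fun y => (lam q <= lam y)%N).
  move=> q; have [E|Hq] := lamf_P (fun l => Palt l q) m.
    by apply: filterE => y; rewrite /lam E.
  apply: filterS (Palt_near Hq) => y Py.
  case: (posnP (lam q)) => [->//|lq0].
  by apply: lamf_ge => //; apply: Hlam_le.
have Hconv : forall q, K q -> \forall i \near \oo, q i = odd (lam q).
  move=> q Kq; have [s Hs] := HlamP q.
  apply: filterS (nbhs_infty_gt (smax s)) => i si.
  apply: (Palt_last Hs) => // HP.
  have lqm : (lam q < m)%N.
    rewrite ltn_neqAle Hlam_le andbT; apply/eqP => E; apply: (HKm q Kq); by rewrite -E.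
  have := lamf_ge (P := fun l => Palt l q) (isT : (0 < (lam q).+1)%N) lqm HP.
  by rewrite -/(lam q) ltnn.
pose F1 := fun q => ((uphalf (lam q))%:R : R).
pose F2 := fun q => (((lam q)./2)%:R : R).
pose g := fun q => F1 q - F2 q.
have Hg : forall q, g q = ((odd (lam q))%:R : R).
  by move=> q; rewrite /g /F1 /F2 uphalf_half natrD addrK.
have Hbnd : forall F : nat -> nat, (forall j, (F j <= j)%N) ->
    bounded_on K (fun q => ((F (lam q))%:R : R)).
  move=> F HF; exists (m%:R) => q _; rewrite normr_nat ler_nat.
  exact: leq_trans (HF _) (Hlam_le q).
have Hlsc : forall F : nat -> nat, {homo F : x y / (x <= y)%N} ->
    lsc_on K (fun q => ((F (lam q))%:R : R)).
  move=> F HF x _ e e0; apply: filterS (Hmono x) => y Hy _.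
  rewrite ltrBlDr; apply: (@le_lt_trans _ _ ((F (lam y))%:R)).
    by rewrite ler_nat; apply: HF.
  by rewrite ltrDl.
have HK : closed K.
  move=> q Hq N; have [y [Ky Hy]] := Hq _ (cyl_near q N).
  have [b' Hb'] := Ky N; exists b' => i iN; rewrite Hb' // Hy //.
have HDBSC : DBSC_on K g.
  exists F1, F2; split; [|split; [|split; [|split]]].
  - apply: (Hbnd uphalf) => j; rewrite uphalf_half; have := odd_double_half j.
    have := leq_b1 (odd j); lia.
  - by left; apply: (Hlsc uphalf) => x y; apply: uphalf_leq.
  - by apply: (Hbnd half) => j; have := odd_double_half j; lia.
  - by left; apply: (Hlsc half) => x y; apply: half_leq.
  - by [].
apply: (HC n k phi a Hphi) (ex_intro _ b Hab).
exists g; split; first exact: HClDBSC.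
move=> q Kq; apply: cvg_near_cst; apply: filterS (Hconv q Kq) => i ->.
by rewrite Hg.
Qed.

Local Close Scope ring_scope.

Unset Implicit Arguments. Set Strict Implicit.

Theorem proposition3p6 (R : realType)
  (Cl : set cantor_space -> (cantor_space -> R) -> Prop)
  (HClB1 : forall K f, closed K -> Cl K f -> baire1_on K f)
  (HClDBSC : forall K f, closed K -> DBSC_on K f -> Cl K f)
  (L : language) (M : structure L) (m0 : M)
  (Hsat : aleph1_saturated M) :
  stable M <-> (NIP M /\ is_C M Cl).
Proof.
split.
  move=> Hst; split.
    move=> n k phi Hphi [a Ha]; apply: (Hst n k phi Hphi).
    have Hb : forall j, exists b : 'I_k -> M, forall i, holds phi (a i) b <-> (i < j)%N.
      by move=> j; apply: (Ha (fun i => (i < j)%N)).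
    have [bf Hbf] := boolp.choice Hb.
    by exists a, bf.
  move=> n k phi a Hphi _ [b Hb]; apply: (Hst n k phi Hphi); by exists a, b.
move=> [Hnip HC] n k phi Hphi [a [b Hab]].
pose Alt := fun s : seq nat => exists y : 'I_k -> M, forall p, (p < size s)%N ->
   (holds phi (a (nth 0 s p)) y <-> ~~ odd p).
have [[m [h [Hh Hno]]]|Hnot] := boolp.pselect (exists m h, sinc h /\
     forall s, size s = m -> sorted ltn s -> ~ Alt (map h s)).
  apply: (@stepA R Cl HClDBSC L M n k phi Hphi (fun i => a (h i)) (fun j => b (h j)) _ HC m).
    move=> i j; apply: iff_trans (Hab _ _) _; split; first exact: sinc_inv.
    exact: sinc_lt.
  move=> s s1 s2 [y Hy]; apply: (Hno s s1 s2); exists y => p; rewrite size_map => ps.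
  by rewrite (nth_map 0) //; apply: Hy; rewrite -s1.
have Hfin : forall r, exists A : nat -> 'I_n -> M, forall S : nat -> bool,
     exists y : 'I_k -> M, forall p, (p < r)%N -> (holds phi (A p) y <-> S p).
  move=> r; have [h [Hh [col Hcol]]] := ramsey (2 * r) (fun s => `[< Alt s >]).
  have Hall : forall s, size s = 2 * r -> sorted ltn s -> Alt (map h s).
    move=> s s1 s2; apply/asboolP; rewrite Hcol //.
    case: col Hcol => // Hcol; exfalso; apply: Hnot; exists (2 * r), h; split=> //.
    by move=> s' s1' s2' /asboolP; rewrite Hcol.
  exists (fun p => a (h (3 * p + 1))) => S.
  pose f := fun j => 3 * (j %/ 2) + S (j %/ 2) + j %% 2.
  have Hf : sinc f.
    move=> j; rewrite /f.
    have [[E1 [E2 E3]]|[E1 [E2 E3]]] : (j.+1 %/ 2 = j %/ 2 /\ j %% 2 = 0 /\ j.+1 %% 2 = 1) \/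
        (j.+1 %/ 2 = (j %/ 2).+1 /\ j %% 2 = 1 /\ j.+1 %% 2 = 0) by lia.
      by rewrite E1 E2 E3; lia.
    by rewrite E1 E2 E3; have := leq_b1 (S (j %/ 2)); lia.
  pose s := map f (iota 0 (2 * r)).
  have ss : size s = 2 * r by rewrite size_map size_iota.
  have [y Hy] := Hall s ss (sorted_map_sinc Hf (iota_ltn_sorted 0 _)).
  exists y => p pr.
  pose q := 2 * p + ~~ S p.
  have qr : (q < 2 * r)%N by rewrite /q; have := leq_b1 (~~ S p); lia.
  have := Hy q; rewrite !size_map size_iota => /(_ qr).
  rewrite (nth_map 0) ?size_map ?size_iota // (nth_map 0) ?size_iota // nth_iota // add0n.
  have -> : f q = 3 * p + 1.
    rewrite /f /q; have -> : (2 * p + ~~ S p) %/ 2 = p by case: (S p) => /=; lia.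
    have -> : (2 * p + ~~ S p) %% 2 = ~~ S p by case: (S p) => /=; lia.
    by case: (S p) => /=; lia.
  move=> H; apply: iff_trans H _.
  by rewrite /q oddD mul2n odd_double /=; case: (S p).
have [A HA] := phase1 m0 Hsat Hphi Hfin.
have := phase2 m0 Hsat Hphi HA.
move=> HS; apply: (Hnip n k phi Hphi); by exists A.
Qed.
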